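(* Let $T,s,k\in\mathbb{N}$ and let $w\in\{0,1\}^T$ be a random variable satisfying the $\epsilon$-martingale condition. Then \[ \Pr_w\bigl[\text{there is a decomposition } w=xyz \text{ with } |x|=s-1,\ |y|\ge k, \text{ such that } \mu_x(y)\ge0\bigr]\le O(1)\cdot\exp(-\Omega(k)). \]
   Context: Characteristic strings and forks. A characteristic string is $w=w_1\dots w_n\in\{0,1\}^n$; index $i$ is honest if $w_i=0$ and adversarial if $w_i=1$. A fork for $w$ is a rooted tree with edges directed away from the root $r$ and labeling $\ell:V\to\{0,\dots,n\}$ with (F1) $\ell(r)=0$; (F2) labels strictly increasing along directed paths; (F3) each honest index labels exactly one vertex; (F4) for honest $i<j$ the vertex labeled $i$ has strictly smaller depth than the vertex labeled $j$. Write $F\vdash w$. A vertex is honest if it is the root or labeled by an honest index. A tine is a directed path from the root; its length is its number of edges, $\ell(t)$ the label of its last vertex. A fork is closed if every leaf is honest; a closed fork has a unique longest tine $\hat t$. For closed $F\vdash w$ and tine $t$: $\mathrm{gap}(t)=\mathrm{length}(\hat t)-\mathrm{length}(t)$, $\mathrm{reserve}(t)=|\{i:w_i=1,\ i>\ell(t)\}|$, $\mathrm{reach}(t)=\mathrm{reserve}(t)-\mathrm{gap}(t)$. For $w=xy$, tines are disjoint over $y$ if they share no edge terminating at a vertex with label $>|x|$ (a tine may be paired with itself). $\mu_x(F)=\max\min\{\mathrm{reach}(t_1),\mathrm{reach}(t_2)\}$ over pairs disjoint over $y$, and $\mu_x(y)=\max\{\mu_x(F):F\vdash xy\text{ closed}\}$.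 A random variable $W\in\{0,1\}^n$ satisfies the $\epsilon$-martingale condition ($\epsilon\in(0,1)$) if for every $t$, $\Pr[W_t=1\mid W_1,\dots,W_{t-1}]\le(1-\epsilon)/2$. The asymptotic constants may depend on $\epsilon$. *)

(* Defs.v *)
From HB Require Import structures.
From mathcomp Require Import all_boot all_order all_algebra.
From mathcomp Require Import boolp reals sequences exp.
Set Implicit Arguments. Unset Strict Implicit. Unset Printing Implicit Defensive.
Import Order.TTheory GRing.Theory Num.Theory.

(* Characteristic strings: w : seq bool, w_i = nth false w i.-1 for 1 <= i <= size w;
   true = 1 = adversarial, false = 0 = honest. *)
Definition honest_idx (w : seq bool) (i : nat) : bool :=
  (0 < i <= size w) && ~~ nth false w i.-1.
Definition adv_idx (w : seq bool) (i : nat) : bool :=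
  (0 < i <= size w) && nth false w i.-1.

(* A rooted tree with vertices 0 .. fsize-1, root 0, parent map fpar
   (fpar v < v for non-root v, so every finite rooted tree is representable,
   e.g. via BFS numbering), and labeling flab. *)
Record fork := Fork { fsize : nat; fpar : nat -> nat; flab : nat -> nat }.

Fixpoint depth_aux (par : nat -> nat) (f v : nat) : nat :=
  match f with
  | 0 => 0
  | f'.+1 => if v == 0 then 0 else (depth_aux par f' (par v)).+1
  end.
Definition depth (F : fork) (v : nat) : nat := depth_aux (fpar F) v v.

Fixpoint anc_aux (par : nat -> nat) (f u v : nat) : bool :=
  match f with
  | 0 => u == v
  | f'.+1 => (u == v) || ((v != 0) && anc_aux par f' u (par v))
  end.
Definition on_tine (F : fork) (u v : nat) : bool := anc_aux (fpar F) v u v.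

Definition is_fork (w : seq bool) (F : fork) : Prop :=
  [/\ 0 < fsize F /\ flab F 0 = 0,
      (forall v, 0 < v < fsize F ->
         fpar F v < v /\ flab F (fpar F v) < flab F v),
      (forall v, v < fsize F -> flab F v <= size w),
      (forall i, honest_idx w i ->
         count (fun v => flab F v == i) (iota 0 (fsize F)) = 1)
    & (forall u v, u < fsize F -> v < fsize F ->
         honest_idx w (flab F u) -> honest_idx w (flab F v) ->
         flab F u < flab F v -> depth F u < depth F v)].

Definition honest_vertex (w : seq bool) (F : fork) (v : nat) : bool :=
  (v == 0) || honest_idx w (flab F v).
Definition is_leaf (F : fork) (v : nat) : bool :=
  all (fun u => (u == 0) || (fpar F u != v)) (iota 0 (fsize F)).
Definition closed_fork (w : seq bool) (F : fork) : Prop :=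
  forall v, v < fsize F -> is_leaf F v -> honest_vertex w F v.

Definition height (F : fork) : nat := \max_(v < fsize F) depth F v.
Definition gap (F : fork) (v : nat) : nat := height F - depth F v.
Definition reserve (w : seq bool) (F : fork) (v : nat) : nat :=
  count (fun i => adv_idx w i && (flab F v < i)) (iota 1 (size w)).
Definition reach (w : seq bool) (F : fork) (v : nat) : int :=
  (reserve w F v)%:Z - (gap F v)%:Z.

(* tines ending at u and v are disjoint over y (|x| = a): they share no
   edge terminating at a vertex with label > a *)
Definition disjoint_over (F : fork) (a u v : nat) : bool :=
  all (fun q => ~~ [&& 0 < q, on_tine F q u, on_tine F q v & a < flab F q])
      (iota 0 (fsize F)).

(* mu_x(F) for F |- x ++ y: maximum over pairs of tines disjoint over y of the
   minimum reach; the pair (root, root) is always admissible, so its value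
   serves as the (harmless) default of the iterated max. *)
Definition mu_fork (x y : seq bool) (F : fork) : int :=
  let w := x ++ y in
  let r0 := reach w F 0 in
  \big[Num.max/r0]_(u < fsize F)
    \big[Num.max/r0]_(v < fsize F | disjoint_over F (size x) u v)
      Num.min (reach w F u) (reach w F v).

Definition mu_nonneg (x y : seq bool) : Prop :=
  exists F, [/\ is_fork (x ++ y) F, closed_fork (x ++ y) F & (0 <= mu_fork x y F)%R].

Definition is_distr (R : realType) (T : nat) (p : T.-tuple bool -> R) : Prop :=
  (forall w, (0 <= p w)%R) /\ (\sum_(w : T.-tuple bool) p w = 1)%R.

(* epsilon-martingale condition: Pr[W_{t+1} = 1 | W_1..W_t = b] <= (1-eps)/2,
   written multiplicatively (vacuous on null prefixes). *)
Definition martingale_cond (R : realType) (T : nat) (eps : R)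
    (p : T.-tuple bool -> R) : Prop :=
  forall t : nat, t < T -> forall b : seq bool, size b = t ->
    (\sum_(w : T.-tuple bool | (take t w == b) && nth false w t) p w
      <= (1 - eps) / 2 * \sum_(w : T.-tuple bool | take t w == b) p w)%R.

Definition Pr (R : realType) (T : nat) (p : T.-tuple bool -> R)
    (E : T.-tuple bool -> Prop) : R :=
  (\sum_(w : T.-tuple bool) if `[< E w >] then p w else 0)%R.

Definition bad_event (s k T : nat) (w : T.-tuple bool) : Prop :=
  exists x y z : seq bool,
    [/\ tval w = x ++ y ++ z, size x = s.-1, k <= size y & mu_nonneg x y].

(* Main.v *)
Require Import Defs.
From HB Require Import structures.
From mathcomp Require Import all_boot all_order all_algebra.
From mathcomp Require Import boolp reals sequences exp.
From mathcomp Require Import zify ring lra.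
Import Order.TTheory GRing.Theory Num.Theory.
Set Implicit Arguments. Unset Strict Implicit. Unset Printing Implicit Defensive.

Section Comb.
Variable F : fork.
Hypothesis Hpar : forall v, 0 < v < fsize F -> fpar F v < v.

Lemma depth_auxE v f : v < fsize F -> v <= f ->
  depth_aux (fpar F) f v = depth_aux (fpar F) v v.
Proof.
elim: v {-2}v (leqnn v) f => [|n IH] v Hv f Hvn Hvf.
  by move: Hv; rewrite leqn0 => /eqP ->; case: f {Hvf}.
case: v Hv Hvn Hvf => [|v] Hv Hvn Hvf; first by case: f {Hvf}.
case: f Hvf => [//|f] Hvf /=.
have Hp := Hpar (v:=v.+1) (ltac:(by rewrite Hvn)).
congr S.
have h1 : fpar F v.+1 <= n by lia.
have h2 : fpar F v.+1 < fsize F by lia.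
rewrite (IH _ h1 f h2); last by lia.
by rewrite (IH _ h1 v h2) //; lia.
Qed.

Lemma depth0 : depth F 0 = 0.
Proof. by []. Qed.

Lemma depth_par v : 0 < v < fsize F -> depth F v = (depth F (fpar F v)).+1.
Proof.
case: v => [//|v] /= Hv.
rewrite /depth /=; congr S.
have Hp := Hpar (v:=v.+1) (ltac:(by rewrite Hv)).
rewrite depth_auxE //; lia.
Qed.

Lemma anc_auxE u v f : v < fsize F -> v <= f ->
  anc_aux (fpar F) f u v = anc_aux (fpar F) v u v.
Proof.
elim: v {-2}v (leqnn v) f => [|n IH] v Hv f Hvn Hvf.
  by move: Hv; rewrite leqn0 => /eqP ->; case: f {Hvf} => //= f; rewrite orbF.
case: v Hv Hvn Hvf => [|v] Hv Hvn Hvf; first by case: f {Hvf} => //= f; rewrite orbF.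
case: f Hvf => [//|f] Hvf /=.
have Hp := Hpar (v:=v.+1) (ltac:(by rewrite Hvn)).
congr orb.
have h1 : fpar F v.+1 <= n by lia.
have h2 : fpar F v.+1 < fsize F by lia.
rewrite (IH _ h1 f h2); last by lia.
by rewrite (IH _ h1 v h2) //; lia.
Qed.

Lemma on_tine0 q : on_tine F q 0 = (q == 0).
Proof. by []. Qed.

Lemma on_tine_par q v : 0 < v < fsize F ->
  on_tine F q v = (q == v) || on_tine F q (fpar F v).
Proof.
case: v => [//|v] /= Hv.
rewrite /on_tine /=.
have Hp := Hpar (v:=v.+1) (ltac:(by rewrite Hv)).
rewrite (anc_auxE _ (f:=v)) //; lia.
Qed.

Lemma on_tine_refl v : on_tine F v v.
Proof. by rewrite /on_tine; case: v => //= v; rewrite eqxx. Qed.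

Lemma disjoint_sym a u v : disjoint_over F a u v = disjoint_over F a v u.
Proof.
rewrite /disjoint_over; apply: eq_all => q.
by case: (0 < q); case: (on_tine F q u); case: (on_tine F q v).
Qed.

Lemma disjoint_par a u v : 0 < u < fsize F ->
  disjoint_over F a u v -> disjoint_over F a (fpar F u) v.
Proof.
move=> Hu /allP H; apply/allP => q Hq; move: (H q Hq).
by rewrite (on_tine_par q Hu); apply: contra => /and4P [-> -> -> ->]; rewrite orbT.
Qed.

End Comb.

Fixpoint rho (w : seq bool) (m : nat) : nat :=
  match m with
  | 0 => 0
  | m'.+1 => if nth false w m' then (rho w m').+1 else (rho w m').-1
  end.

Fixpoint mud (w : seq bool) (a d : nat) : int :=
  match d with
  | 0 => (rho w a)%:Z
  | d'.+1 => let u := mud w a d' in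
     if nth false w (a + d') then (u + 1)%R
     else if (0 < rho w (a + d'))%N && (u == 0%R) then 0%R else (u - 1)%R
  end.

Section Main.
Variable w : seq bool.
Variable F : fork.
Hypothesis HF : is_fork w F.

Let N := fsize F.
Let par := fpar F.
Let lab := flab F.

Lemma Hpar v : 0 < v < fsize F -> fpar F v < v.
Proof. by case: HF => _ H _ _ _ /H []. Qed.

Lemma Hlabpar v : 0 < v < fsize F -> flab F (fpar F v) < flab F v.
Proof. by case: HF => _ H _ _ _ /H []. Qed.

Lemma Hlab0 : flab F 0 = 0.
Proof. by case: HF => [[]]. Qed.

Lemma Hlabw v : v < fsize F -> flab F v <= size w.
Proof. by case: HF => _ _ H _ _ /H. Qed.

Lemma lab_pos v : 0 < v < fsize F -> 0 < flab F v.
Proof. by move=> /Hlabpar; apply: leq_ltn_trans. Qed.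

Lemma F3_ex i : honest_idx w i -> exists2 v, v < fsize F & flab F v = i.
Proof.
case: HF => _ _ _ H _ /H Hc.
have : has (fun v => flab F v == i) (iota 0 (fsize F)) by rewrite has_count Hc.
case/hasP => v; rewrite mem_iota add0n => /andP [_ Hv] /eqP <-.
by exists v.
Qed.

Lemma F3_uniq i u v : honest_idx w i -> u < fsize F -> v < fsize F ->
  flab F u = i -> flab F v = i -> u = v.
Proof.
case: HF => _ _ _ H _ /H Hc Hu Hv Hlu Hlv.
apply/eqP; apply: contraT => Huv.
have : size [:: u; v] <= size (filter (fun v => flab F v == i) (iota 0 (fsize F))).
  apply: uniq_leq_size; first by rewrite /= inE andbT.
  move=> x; rewrite !inE mem_filter mem_iota add0n => /orP [] /eqP ->.
    by rewrite Hlu eqxx Hu.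
  by rewrite Hlv eqxx Hv.
by rewrite size_filter Hc.
Qed.

Lemma F4 u v : u < fsize F -> v < fsize F ->
  honest_idx w (flab F u) -> honest_idx w (flab F v) ->
  flab F u < flab F v -> depth F u < depth F v.
Proof. by case: HF => _ _ _ _ H; apply: H. Qed.

Definition hh (m : nat) : nat :=
  \max_(v < fsize F | honest_idx w (flab F v) && (flab F v <= m)) depth F v.

Definition res (m v : nat) : nat :=
  count (fun i => adv_idx w i && (flab F v < i)) (iota 1 m).

Definition rch (m v : nat) : int := ((res m v)%:Z + (depth F v)%:Z - (hh m)%:Z)%R.

Lemma hh_le m d : (forall v, v < fsize F -> honest_idx w (flab F v) -> flab F v <= m ->
  depth F v <= d) -> hh m <= d.
Proof.
move=> H; apply/bigmax_leqP => v /andP [H1 H2].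
exact: H.
Qed.

Lemma le_hh m v : v < fsize F -> honest_idx w (flab F v) -> flab F v <= m ->
  depth F v <= hh m.
Proof.
move=> Hv H1 H2.
exact: (leq_bigmax_cond (P := fun v : 'I_(fsize F) => honest_idx w (flab F v) && (flab F v <= m))
  (F := fun v : 'I_(fsize F) => depth F v) (Ordinal Hv) (ltac:(by rewrite /= H1 H2))).
Qed.

Lemma res_S m v : res m.+1 v = res m v + (adv_idx w m.+1 && (flab F v < m.+1)).
Proof.
rewrite /res; have -> : iota 1 m.+1 = iota 1 m ++ [:: m.+1] by rewrite -(addn1 m) iotaD add1n addn1.
by rewrite count_cat /= addn0.
Qed.

Lemma res_big m v : m <= flab F v -> res m v = 0.
Proof.
move=> H; rewrite /res (eq_in_count (a2 := pred0)) ?count_pred0 //.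
move=> i; rewrite mem_iota => /andP [_ Hi] /=.
apply/negbTE; rewrite negb_and; apply/orP; right; rewrite -leqNgt; lia.
Qed.

Lemma depth_parF v : 0 < v < fsize F -> depth F v = (depth F (fpar F v)).+1.
Proof. exact: (depth_par Hpar). Qed.

End Main.

Section Main2.
Variable w : seq bool.
Variable F : fork.
Hypothesis HF : is_fork w F.

Lemma adv_S m : m < size w -> adv_idx w m.+1 = nth false w m.
Proof. by move=> H; rewrite /adv_idx H. Qed.

Lemma hon_S m : m < size w -> honest_idx w m.+1 = ~~ nth false w m.
Proof. by move=> H; rewrite /honest_idx H. Qed.

Lemma hh_adv m : m < size w -> nth false w m -> hh w F m.+1 = hh w F m.
Proof.
move=> Hm Hb; apply/eqP; rewrite eqn_leq; apply/andP; split.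
  apply: hh_le => v Hv Hh Hl; apply: le_hh => //.
  move: Hl; rewrite leq_eqVlt => /orP [/eqP Hl|//].
  by move: Hh; rewrite Hl hon_S // Hb.
apply: hh_le => v Hv Hh Hl; apply: le_hh => //; lia.
Qed.

Lemma hh_hon m : m < size w -> ~~ nth false w m ->
  exists vs, [/\ vs < fsize F, flab F vs = m.+1, 0 < vs,
     hh w F m.+1 = depth F vs & hh w F m < depth F vs].
Proof.
move=> Hm Hb.
have Hh : honest_idx w m.+1 by rewrite hon_S.
case: (F3_ex HF Hh) => vs Hvs Hl.
have Hvs0 : 0 < vs by case: vs Hvs Hl => //; rewrite (Hlab0 HF).
have Hd : 0 < depth F vs by rewrite (depth_parF HF) //; rewrite Hvs0 Hvs.
have Hlt : hh w F m < depth F vs.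
  suff : hh w F m <= (depth F vs).-1 by lia.
  apply: hh_le => v Hv Hhv Hlv.
  have := F4 HF Hv Hvs Hhv (ltac:(by rewrite Hl)) (ltac:(by rewrite Hl)); lia.
exists vs; split => //.
apply/eqP; rewrite eqn_leq; apply/andP; split; last by apply: le_hh => //; rewrite Hl.
apply: hh_le => v Hv Hhv; rewrite leq_eqVlt => /orP [/eqP Hlv|Hlv].
  by rewrite (F3_uniq HF Hh Hv Hvs Hlv Hl).
have := le_hh Hv Hhv (Hlv : flab F v <= m); lia.
Qed.

Lemma rch_adv m v : m < size w -> nth false w m -> v < fsize F -> flab F v <= m ->
  rch w F m.+1 v = (rch w F m v + 1)%R.
Proof.
move=> Hm Hb Hv Hl.
rewrite /rch hh_adv // res_S adv_S // Hb /=.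
have -> : flab F v < m.+1 by lia.
rewrite /= PoszD; lia.
Qed.

Lemma rch_adv_par m v : m < size w -> nth false w m -> v < fsize F -> flab F v = m.+1 ->
  [/\ 0 < v, flab F (fpar F v) <= m, fpar F v < fsize F &
     (rch w F m.+1 v <= rch w F m.+1 (fpar F v))%R].
Proof.
move=> Hm Hb Hv Hl.
have Hv0 : 0 < v by case: v Hv Hl => //; rewrite (Hlab0 HF).
have Hvv : 0 < v < fsize F by rewrite Hv0 Hv.
have Hlp := Hlabpar HF Hvv.
have Hpp := Hpar HF Hvv.
split => //; try lia.
rewrite /rch (@res_big w F m.+1 v) ?Hl // res_S adv_S // Hb /=.
have -> : flab F (fpar F v) < m.+1 by lia.
rewrite (depth_parF HF Hvv) /=; lia.
Qed.

Lemma rch_hon m v vs : m < size w -> ~~ nth false w m -> v < fsize F -> flab F v <= m ->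
  hh w F m.+1 = depth F vs -> hh w F m < depth F vs ->
  (rch w F m.+1 v <= rch w F m v - 1)%R.
Proof.
move=> Hm Hb Hv Hl H1 H2.
rewrite /rch H1 res_S adv_S // (negbTE Hb) /= addn0; lia.
Qed.

Lemma rch_vs m vs : flab F vs = m.+1 -> hh w F m.+1 = depth F vs -> rch w F m.+1 vs = 0%R.
Proof.
move=> Hl H; rewrite /rch H res_big ?Hl //; lia.
Qed.

Lemma lab0_root v : v < fsize F -> flab F v <= 0 -> v = 0.
Proof.
move=> Hv; case: v Hv => // v Hv; have := lab_pos HF (v:=v.+1) (ltac:(by rewrite Hv)); lia.
Qed.

Theorem thmA m : m <= size w -> forall v, v < fsize F -> flab F v <= m ->
  (rch w F m v <= (rho w m)%:Z)%R.
Proof.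
elim: m => [|m IH] Hm v Hv Hl.
  rewrite (lab0_root Hv Hl) /rch /res /= depth0; lia.
have Hm' : m < size w by lia.
case Hb: (nth false w m).
  have rS : rho w m.+1 = (rho w m).+1 by rewrite /= Hb.
  rewrite rS.
  have gen : forall u, u < fsize F -> flab F u <= m -> (rch w F m.+1 u <= (rho w m).+1%:Z)%R.
    move=> u Hu Hlu; rewrite rch_adv //; have := IH (ltnW Hm') u Hu Hlu; lia.
  move: Hl; rewrite leq_eqVlt => /orP [/eqP Hl|Hl]; last exact: gen.
  case: (rch_adv_par Hm' Hb Hv Hl) => _ H1 H2 H3.
  exact: (le_trans H3 (gen _ H2 H1)).
have Hb' : ~~ nth false w m by rewrite Hb.
have rS : rho w m.+1 = (rho w m).-1 by rewrite /= Hb.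
rewrite rS.
case: (hh_hon Hm' Hb') => vs [Hvs Hlvs Hvs0 H1 H2].
move: Hl; rewrite leq_eqVlt => /orP [/eqP Hl|Hl].
  have Hh : honest_idx w m.+1 by rewrite hon_S.
  rewrite (F3_uniq HF Hh Hv Hvs Hl Hlvs) (rch_vs Hlvs H1); lia.
have := rch_hon Hm' Hb' Hv Hl H1 H2.
have := IH (ltnW Hm') v Hv Hl; lia.
Qed.

End Main2.

Section Main3.
Variable w : seq bool.
Variable F : fork.
Hypothesis HF : is_fork w F.

Lemma mud_le_rho a d : (mud w a d <= (rho w (a + d))%:Z)%R.
Proof.
elim: d => [|d IH] /=; first by rewrite addn0.
rewrite addnS /=.
case: (nth false w (a + d)) => /=; first by move: IH; lia.
case: ifP => [/andP [H1 /eqP H2]|_]; first by move: H1; lia.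
move: IH; lia.
Qed.

End Main3.


Section Main3b.
Variable w : seq bool.
Variable F : fork.
Hypothesis HF : is_fork w F.
Theorem thmB a d : a + d <= size w -> forall u v, u < fsize F -> v < fsize F ->
  flab F u <= a + d -> flab F v <= a + d -> disjoint_over F a u v ->
  (Num.min (rch w F (a + d) u) (rch w F (a + d) v) <= mud w a d)%R.
Proof.
elim: d => [|d IH] Hm u v Hu Hv Hlu Hlv Hdis.
  rewrite ge_min; apply/orP; left; rewrite addn0 /=.
  rewrite addn0 in Hm Hlu; exact: (thmA HF).
rewrite addnS in Hm Hlu Hlv *.
set m := a + d in IH Hm Hlu Hlv *.
have Hm' : m < size w by lia.
have IH' := IH (ltnW Hm').
case Hb: (nth false w m).
  have mS : mud w a d.+1 = (mud w a d + 1)%R by rewrite /= Hb.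
  rewrite mS.
  (* reduce vertices labeled m+1 to their parents *)
  have red : forall x, x < fsize F -> flab F x <= m.+1 ->
    exists x', [/\ x' < fsize F, flab F x' <= m,
       (rch w F m.+1 x <= rch w F m x' + 1)%R &
       forall y, disjoint_over F a x y -> disjoint_over F a x' y].
    move=> x Hx Hlx; move: Hlx; rewrite leq_eqVlt => /orP [/eqP Hlx|Hlx].
      case: (rch_adv_par HF Hm' Hb Hx Hlx) => Hx0 H1 H2 H3.
      exists (fpar F x); split => //.
        by rewrite -(rch_adv Hm' Hb H2 H1).
      by move=> y; apply: disjoint_par; [exact: Hpar HF|rewrite Hx0 Hx].
    exists x; split => //; by rewrite (rch_adv Hm' Hb Hx Hlx).
  case: (red u Hu Hlu) => u' [Hu' Hlu' Hru Hdu].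
  case: (red v Hv Hlv) => v' [Hv' Hlv' Hrv Hdv].
  have Hdis' : disjoint_over F a u' v'.
    rewrite disjoint_sym; apply: Hdv; rewrite disjoint_sym; exact: Hdu.
  have := IH' u' v' Hu' Hv' Hlu' Hlv' Hdis'.
  rewrite !ge_min => /orP [H|H]; apply/orP; [left|right]; move: H Hru Hrv; lia.
have Hb' : ~~ nth false w m by rewrite Hb.
set M := mud w a d in IH' *.
have mS : mud w a d.+1 = if (0 < rho w m)%N && (M == 0%R) then 0%R else (M - 1)%R.
  by rewrite /= Hb.
rewrite mS.
have mlow : (M - 1 <= (if (0 < rho w m)%N && (M == 0%R) then 0%R else (M - 1)%R))%R.
  by case: ifP => // /andP [_ /eqP ->].
case: (hh_hon HF Hm' Hb') => vs [Hvs Hlvs Hvs0 H1 H2].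
have Hh : honest_idx w m.+1 by rewrite hon_S.
have low : forall x, x < fsize F -> flab F x <= m.+1 -> x <> vs -> flab F x <= m.
  move=> x Hx; rewrite leq_eqVlt => /orP [/eqP Hlx|//] Hne.
  by case: Hne; apply: (F3_uniq HF Hh Hx Hvs Hlx Hlvs).
have key : forall y, y < fsize F -> flab F y <= m.+1 -> y <> vs ->
    disjoint_over F a vs y ->
    (rch w F m.+1 vs <= (if (0 < rho w m)%N && (M == 0%R) then 0%R else (M - 1)%R))%R
    || (rch w F m.+1 y <= (if (0 < rho w m)%N && (M == 0%R) then 0%R else (M - 1)%R))%R.
  move=> y Hy Hly Hne Hd.
  have Hly' := low y Hy Hly Hne.
  have Hvv : 0 < vs < fsize F by rewrite Hvs0 Hvs.
  have Hc := Hpar HF Hvv.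
  have Hlc := Hlabpar HF Hvv.
  have Hdc : disjoint_over F a (fpar F vs) y by apply: disjoint_par => //; exact: Hpar HF.
  have := IH' (fpar F vs) y (ltac:(lia)) Hy (ltac:(lia)) Hly' Hdc.
  rewrite ge_min => HI.
  have Hcpos : (0 <= rch w F m (fpar F vs))%R.
    rewrite /rch; move: H2; rewrite (depth_parF HF Hvv); lia.
  have Hry := rch_hon Hm' Hb' Hy Hly' H1 H2.
  have HyA := thmA HF (ltnW Hm') Hy Hly'.
  rewrite (rch_vs Hlvs H1).
  case/orP: HI => HI.
    case: (boolP (rch w F m y <= M)%R) => Hy2.
      apply/orP; right; apply: le_trans mlow; move: Hry Hy2; lia.
    apply/orP; left.
    have HM0 : (0 <= M)%R by move: Hcpos HI; lia.
    have Hr0 : (0 < rho w m)%N by move: Hy2 HyA HM0; lia.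
    rewrite Hr0 /=; case: eqP => // HM; move: HM0 HM; lia.
  apply/orP; right; apply: le_trans mlow; move: Hry HI; lia.
case: (eqVneq u vs) => Huv; case: (eqVneq v vs) => Hvv.
- exfalso; move: Hdis; rewrite Huv Hvv /disjoint_over => /allP /(_ vs).
  rewrite mem_iota add0n Hvs /= => /(_ isT); rewrite Hvs0 on_tine_refl Hlvs /=.
  have Ham : a < m.+1 by rewrite /m; lia.
  by rewrite Ham.
- rewrite Huv ge_min; apply: key => //.
    by move/eqP: Hvv.
  by rewrite -Huv.
- rewrite Hvv ge_min orbC; apply: key => //.
    by move/eqP: Huv.
  by rewrite disjoint_sym -Hvv.
have Hlu' := low u Hu Hlu (elimN eqP Huv).
have Hlv' := low v Hv Hlv (elimN eqP Hvv).
have := IH' u v Hu Hv Hlu' Hlv' Hdis.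
have := rch_hon Hm' Hb' Hu Hlu' H1 H2.
have := rch_hon Hm' Hb' Hv Hlv' H1 H2.
rewrite !ge_min => Hr1 Hr2 /orP [H|H]; apply/orP; [left|right];
  apply: le_trans mlow; move: H Hr1 Hr2; lia.
Qed.

End Main3b.


Section Closed.
Variable w : seq bool.
Variable F : fork.
Hypothesis HF : is_fork w F.
Hypothesis HC : closed_fork w F.

Lemma closed_depth v : v < fsize F -> depth F v <= hh w F (size w).
Proof.
have [k Hk] : exists k, fsize F - v <= k by exists (fsize F - v).
elim: k v Hk => [|k IH] v Hk Hv; first by lia.
case Hleaf: (is_leaf F v).
  move: (HC Hv Hleaf); rewrite /honest_vertex => /orP [/eqP ->|Hh].
    by rewrite depth0.
  by apply: le_hh => //; apply: (Hlabw HF).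
move/negbT: Hleaf; rewrite /is_leaf => /allPn [u].
rewrite mem_iota add0n => /andP [_ Hu]; rewrite negb_or negbK => /andP [Hu0 /eqP Hpu].
have Huu : 0 < u < fsize F by rewrite lt0n Hu0 Hu.
have Hp := Hpar HF Huu.
have := IH u (ltac:(lia)) Hu.
rewrite (depth_parF HF Huu) Hpu; lia.
Qed.

Lemma height_hh : height F = hh w F (size w).
Proof.
apply/eqP; rewrite eqn_leq; apply/andP; split.
  by apply/bigmax_leqP => i _; apply: closed_depth.
by apply/bigmax_leqP => i _; apply: (leq_bigmax (F := fun i : 'I_(fsize F) => depth F i)).
Qed.

Lemma reach_rch v : v < fsize F -> reach w F v = rch w F (size w) v.
Proof.
move=> Hv; rewrite /reach /rch /gap height_hh /reserve /res.
have := closed_depth Hv; lia.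
Qed.

End Closed.

Lemma mu_fork_bound x y F : is_fork (x ++ y) F -> closed_fork (x ++ y) F ->
  (mu_fork x y F <= mud (x ++ y) (size x) (size y))%R.
Proof.
move=> HF HC.
have Hs : size x + size y <= size (x ++ y) by rewrite size_cat.
have Hlab : forall v, v < fsize F -> flab F v <= size x + size y.
  by move=> v Hv; rewrite -size_cat; apply: (Hlabw HF).
have Hpair : forall u v, u < fsize F -> v < fsize F -> disjoint_over F (size x) u v ->
    (Num.min (reach (x ++ y) F u) (reach (x ++ y) F v) <= mud (x ++ y) (size x) (size y))%R.
  move=> u v Hu Hv Hd.
  rewrite !(reach_rch HF HC) //.
  have := thmB HF Hs Hu Hv (Hlab u Hu) (Hlab v Hv) Hd.
  by rewrite size_cat.
have H0 : 0 < fsize F by case: HF => [[]].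
have Hr0 : (reach (x ++ y) F 0 <= mud (x ++ y) (size x) (size y))%R.
  rewrite -[reach _ _ 0]minxx; apply: Hpair => //.
  by rewrite /disjoint_over; apply/allP => q _; rewrite on_tine0; case: q.
rewrite /mu_fork.
apply: (big_ind (fun z => z <= _)%R) => //.
  by move=> a b Ha Hb; rewrite ge_max Ha Hb.
move=> u _; apply: (big_ind (fun z => z <= _)%R) => //.
  by move=> a b Ha Hb; rewrite ge_max Ha Hb.
by move=> v Hd; apply: Hpair.
Qed.

Local Open Scope ring_scope.

Section Prob.
Variable R : realType.
Variable T : nat.
Variable p : T.-tuple bool -> R.
Variable q : R.

Lemma part (G : T.-tuple bool -> R) t : (t <= T)%N ->
  \sum_(w : T.-tuple bool) G w =
  \sum_(b : t.-tuple bool) \sum_(w : T.-tuple bool | take t w == b) G w.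
Proof.
move=> Ht.
transitivity (\sum_(w : T.-tuple bool) \sum_(b : t.-tuple bool | take t w == b) G w).
  apply: eq_bigr => w _.
  have Hsz : size (take t w) == t by rewrite size_take size_tuple; case: ltngtP => //; lia.
  rewrite (big_pred1 (Tuple Hsz)) //.
rewrite [LHS](eq_bigr (fun w : T.-tuple bool => \sum_(b : t.-tuple bool) if take t w == b then G w else 0)).
  rewrite exchange_big; apply: eq_bigr => b _.
  by rewrite [RHS]big_mkcond.
by move=> w _; rewrite big_mkcond.
Qed.

Hypothesis Hp0 : forall w, 0 <= p w.
Hypothesis Hmart : forall t : nat, (t < T)%N -> forall b : seq bool, size b = t ->
    \sum_(w : T.-tuple bool | (take t w == b) && nth false w t) p w
      <= q * \sum_(w : T.-tuple bool | take t w == b) p w.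

Lemma step t (g0 g1 h : seq bool -> R) : (t < T)%N ->
  (forall s, 0 <= g0 s) -> (forall s, g0 s <= g1 s) ->
  (forall s, q * g1 s + (1 - q) * g0 s <= h s) ->
  \sum_(w : T.-tuple bool) p w * (if nth false w t then g1 (take t w) else g0 (take t w))
  <= \sum_(w : T.-tuple bool) p w * h (take t w).
Proof.
move=> Ht H0 H01 Hh.
set D := fun s => g1 s - g0 s.
have E1 : forall w : T.-tuple bool, p w * (if nth false w t then g1 (take t w) else g0 (take t w))
   = p w * g0 (take t w) + (if nth false w t then p w * D (take t w) else 0).
  by move=> w; case: (nth false w t); rewrite /D; ring.
rewrite (eq_bigr _ (fun w _ => E1 w)) big_split /=.
have key : \sum_(w : T.-tuple bool) (if nth false w t then p w * D (take t w) else 0)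
   <= q * \sum_(w : T.-tuple bool) p w * D (take t w).
  rewrite (part _ (ltnW Ht)) [X in _ <= q * X](part _ (ltnW Ht)) mulr_sumr.
  apply: ler_sum => b _.
  have -> : \sum_(w : T.-tuple bool | take t w == b)
      (if nth false w t then p w * D (take t w) else 0)
      = D b * \sum_(w : T.-tuple bool | (take t w == b) && nth false w t) p w.
    rewrite big_mkcondr mulr_sumr; apply: eq_bigr => w /eqP ->.
    by case: (nth false w t); rewrite ?mulr0 // mulrC.
  have -> : \sum_(w : T.-tuple bool | take t w == b) p w * D (take t w)
      = D b * \sum_(w : T.-tuple bool | take t w == b) p w.
    rewrite mulr_sumr; apply: eq_bigr => w /eqP ->; by rewrite mulrC.
  rewrite mulrA (mulrC q) -mulrA; apply: ler_wpM2l.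
    by rewrite /D subr_ge0.
  by apply: Hmart => //; rewrite size_tuple.
apply: le_trans (lerD (lexx _) key) _.
rewrite mulr_sumr -big_split /=; apply: ler_sum => w _.
have := Hh (take t w); have := Hp0 w; rewrite /D => Hpw Hhw.
have -> : p w * g0 (take t w) + q * (p w * (g1 (take t w) - g0 (take t w)))
  = p w * (q * g1 (take t w) + (1 - q) * g0 (take t w)) by ring.
by apply: ler_wpM2l.
Qed.

End Prob.

Local Open Scope ring_scope.

Section Pot.
Variable R : realType.
Variable e : R.
Hypothesis H0 : 0 < e.
Hypothesis H1 : e < 1.

Definition qq : R := (1 - e) / 2.
Definition bb : R := 1 + e^+2/4.
Definition cc : R := 1 + e^+2/2.
Definition ia : R := 1 - e.
Definition lam : R := 1 - e^+3/24.

Lemma pos_e2 : 0 < e ^+ 2. Proof. by rewrite exprn_gt0. Qed.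
Lemma pos_e3 : 0 < e ^+ 3. Proof. by rewrite exprn_gt0. Qed.

Lemma c1 : qq * (bb * bb) + (1 - qq) <= lam * bb.
Proof.
rewrite -subr_ge0.
have -> : lam * bb - (qq * (bb * bb) + (1 - qq)) = e^+3 * (5/24 - e/32 + e^+2/48) by rewrite /lam /bb /qq; field.
apply: mulr_ge0; first exact: ltW pos_e3.
have := pos_e2; move: H0 H1; lra.
Qed.
Lemma c2 : qq * (bb * cc) + (1 - qq) <= lam * cc.
Proof.
rewrite -subr_ge0.
have -> : lam * cc - (qq * (bb * cc) + (1 - qq)) = e^+2 * (1/8 + e/3 - e^+2/16 + e^+3/24) by rewrite /lam /bb /qq /cc; field.
apply: mulr_ge0; first exact: ltW pos_e2.
have := pos_e2; have := pos_e3; move: H0 H1; nra.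
Qed.
Lemma c3 : qq * bb + (1 - qq) * (ia * cc) <= lam.
Proof.
rewrite -subr_ge0.
have -> : lam - (qq * bb + (1 - qq) * (ia * cc)) = e * (1/2 + e/8 + e^+2/12 + e^+3/4) by rewrite /lam /bb /qq /cc /ia; field.
apply: mulr_ge0; first exact: ltW H0.
have := pos_e2; have := pos_e3; move: H0 H1; nra.
Qed.
Lemma c4 : qq + (1 - qq) * (ia * ia) <= lam * ia.
Proof.
rewrite -subr_ge0.
have -> : lam * ia - (qq + (1 - qq) * (ia * ia)) = e^+2 * ((1 - e) * (1/2 - e/24)) by rewrite /lam /qq /ia; field.
apply: mulr_ge0; first exact: ltW pos_e2.
apply: mulr_ge0; move: H0 H1; lra.
Qed.
Lemma c5 : qq + (1 - qq) * (ia * ia * cc) <= lam * ia.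
Proof.
rewrite -subr_ge0.
have -> : lam * ia - (qq + (1 - qq) * (ia * ia * cc)) = e^+2 * ((1 - e) * (1/4 - e/24 + e^+2/4)) by rewrite /lam /qq /ia /cc; field.
apply: mulr_ge0; first exact: ltW pos_e2.
apply: mulr_ge0; first by move: H0 H1; lra.
have := pos_e2; move: H0 H1; lra.
Qed.

Lemma bb_ge1 : 1 <= bb. Proof. have := pos_e2; rewrite /bb; lra. Qed.
Lemma cc_ge1 : 1 <= cc. Proof. have := pos_e2; rewrite /cc; lra. Qed.
Lemma ia_ge0 : 0 <= ia. Proof. rewrite /ia; move: H1; lra. Qed.
Lemma ia_le1 : ia <= 1. Proof. rewrite /ia; move: H0; lra. Qed.
Lemma iacc_le1 : ia * cc <= 1.
Proof.
rewrite /ia /cc; have := pos_e2; have := pos_e3.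
have -> : e ^+ 3 = e * e ^+ 2 by rewrite exprS.
move: H0 H1; nra.
Qed.
Lemma qq_ge0 : 0 <= qq. Proof. rewrite /qq; move: H1; lra. Qed.
Lemma qq_le1 : qq <= 1. Proof. rewrite /qq; move: H0; lra. Qed.
Lemma lam_lt1 : lam < 1. Proof. have := pos_e3; rewrite /lam; lra. Qed.
Lemma lam_gt0 : 0 < lam.
Proof.
have : e ^+ 3 <= 1 by rewrite exprn_ile1 //; [exact: ltW | exact: ltW].
rewrite /lam; lra.
Qed.

Definition f (u : int) : R := match u with Posz n => bb ^+ n | Negz n => ia ^+ n.+1 end.
Definition V (r : nat) (u : int) : R := f u * cc ^+ absz (r%:Z - u).
Definition nu (b : bool) (r : nat) (u : int) : int :=
  if b then u + 1 else if (0 < r)%N && (u == 0) then 0 else u - 1.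

Lemma V_pos n r : (n <= r)%N -> V r (Posz n) = bb ^+ n * cc ^+ (r - n).
Proof. move=> H; rewrite /V /=; congr (_ * _ ^+ _); lia. Qed.
Lemma V_neg n r : V r (Negz n) = ia ^+ n.+1 * cc ^+ (r + n.+1).
Proof. rewrite /V /=; congr (_ * _ ^+ _); lia. Qed.

Lemma f_ge0 u : 0 <= f u.
Proof.
case: u => n /=; apply: exprn_ge0; last exact: ia_ge0.
by apply: le_trans bb_ge1.
Qed.
Lemma V_ge0 r u : 0 <= V r u.
Proof. apply: mulr_ge0; first exact: f_ge0. apply: exprn_ge0; apply: le_trans cc_ge1; exact: ler01. Qed.
Lemma V_ge1 r n : (n <= r)%N -> 1 <= V r (Posz n).
Proof.
move=> H; rewrite V_pos //; apply: mulr_ege1; apply: exprn_ege1.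
  exact: bb_ge1.
exact: cc_ge1.
Qed.

Lemma lin (x y z : R) (Z : R) : 0 <= Z -> x + y <= z -> x * Z + y * Z <= z * Z.
Proof. move=> HZ H; rewrite -mulrDl; exact: ler_wpM2r. Qed.

Lemma V_case r u : u <= r%:Z -> exists Z k0 k1 kV,
  [/\ 0 <= Z, V r.-1 (nu false r u) = k0 * Z, V r.+1 (u + 1) = k1 * Z, V r u = kV * Z &
      k0 <= k1 /\ qq * k1 + (1 - qq) * k0 <= lam * kV].
Proof.
move=> Hur.
have Hb1 := bb_ge1; have Hc1 := cc_ge1; have Hia := ia_ge0; have Hia1 := ia_le1.
have Hiac := iacc_le1.
have ge0 : forall (x : R) n, 1 <= x -> 0 <= x ^+ n by move=> x n Hx; apply: exprn_ge0; lra.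
rewrite /nu /=; case: u Hur => n Hur.
- case: n Hur => [|n] Hur.
  + case: r Hur => [|r] Hur /=.
    * exists 1, (ia * cc), bb, 1; split.
      -- lra.
      -- have -> : (0 - 1 : int) = Negz 0 by [].
         by rewrite V_neg !expr1 mulr1.
      -- by rewrite (@V_pos 1 1) // expr1 expr0 !mulr1.
      -- by rewrite (@V_pos 0 0) // !expr0 mulr1.
      -- split; [lra | rewrite mulr1; exact: c3].
    * exists (cc ^+ r), 1, (bb * cc), cc; split.
      -- exact: ge0.
      -- by rewrite (@V_pos 0 r) // expr0 subn0 !mul1r.
      -- rewrite (@V_pos 1 r.+2) // expr1; have -> : (r.+2 - 1 = r.+1)%N by lia.
         by rewrite exprS mulrA.
      -- by rewrite (@V_pos 0 r.+1) // expr0 subn0 mul1r exprS.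
      -- split; [nra | rewrite ?mulr1; exact: c2].
  + have Hr : (n.+1 <= r)%N by lia.
    have -> : (Posz n.+1 - 1 = Posz n) by lia.
    have -> : (Posz n.+1 + 1 = Posz n.+2) by lia.
    have -> : (Posz n.+1 == 0) = false by [].
    rewrite andbF.
    exists (bb ^+ n * cc ^+ (r - n.+1)), 1, (bb * bb), bb; split.
    * by apply: mulr_ge0; apply: ge0.
    * rewrite (@V_pos n r.-1); last lia.
      have -> : (r.-1 - n = r - n.+1)%N by lia.
      by rewrite mul1r.
    * rewrite (@V_pos n.+2 r.+1); last lia.
      have -> : (r.+1 - n.+2 = r - n.+1)%N by lia.
      by rewrite !exprS; ring.
    * rewrite (@V_pos n.+1 r) //.
      by rewrite !exprS; ring.
    * split; [nra | rewrite ?mulr1; exact: c1].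
- rewrite andbF.
  have -> : (Negz n - 1 = Negz n.+1) by lia.
  case: r Hur => [|r] Hur /=.
  + exists (ia ^+ n * cc ^+ n.+1), (ia * ia * cc), 1, ia; split.
    * apply: mulr_ge0; last exact: ge0. exact: exprn_ge0.
    * rewrite V_neg; have -> : (0 + n.+2 = n.+2)%N by lia.
      by rewrite !exprS; ring.
    * case: n Hur => [|n] Hur.
        have -> : (Negz 0 + 1 = Posz 0) by lia.
        by rewrite (@V_pos 0 1) // !expr0 !mul1r.
      have -> : (Negz n.+1 + 1 = Negz n) by lia.
      rewrite V_neg; have -> : (1 + n.+1 = n.+2)%N by lia.
      by rewrite mul1r.
    * rewrite V_neg; have -> : (0 + n.+1 = n.+1)%N by lia.
      by rewrite exprS; ring.
    * split; [nra | rewrite ?mulr1; exact: c5].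
  + exists (ia ^+ n * cc ^+ (r.+1 + n.+1)), (ia * ia), 1, ia; split.
    * apply: mulr_ge0; last exact: ge0. exact: exprn_ge0.
    * rewrite V_neg; have -> : (r + n.+2 = r.+1 + n.+1)%N by lia.
      by rewrite !exprS; ring.
    * case: n Hur => [|n] Hur.
        have -> : (Negz 0 + 1 = Posz 0) by lia.
        rewrite (@V_pos 0 r.+2) // !expr0 !mul1r subn0.
        by have -> : (r.+1 + 1 = r.+2)%N by lia.
      have -> : (Negz n.+1 + 1 = Negz n) by lia.
      rewrite V_neg; have -> : (r.+2 + n.+1 = r.+1 + n.+2)%N by lia.
      by rewrite mul1r.
    * rewrite V_neg.
      by rewrite exprS; ring.
    * split; [nra | rewrite ?mulr1; exact: c4].
Qed.

Lemma V_step r u : u <= r%:Z ->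
  [/\ 0 <= V r.-1 (nu false r u), V r.-1 (nu false r u) <= V r.+1 (u + 1) &
      qq * V r.+1 (u + 1) + (1 - qq) * V r.-1 (nu false r u) <= lam * V r u].
Proof.
move=> Hur; split; first exact: V_ge0.
all: case: (V_case Hur) => Z [k0 [k1 [kV [HZ E0 E1 EV [Hk Hc]]]]]; rewrite E0 E1 ?EV.
  exact: ler_wpM2r.
have Hq0 := qq_ge0; have Hq1 := qq_le1.
have -> : qq * (k1 * Z) + (1 - qq) * (k0 * Z) = (qq * k1 + (1 - qq) * k0) * Z by ring.
rewrite mulrA; exact: ler_wpM2r.
Qed.

Lemma W_step r : [/\ 0 <= bb ^+ r.-1, bb ^+ r.-1 <= bb ^+ r.+1 &
   qq * bb ^+ r.+1 + (1 - qq) * bb ^+ r.-1 <= lam * bb ^+ r + bb].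
Proof.
have Hb1 := bb_ge1; have Hq0 := qq_ge0; have Hq1 := qq_le1.
have ge0 : forall n, 0 <= bb ^+ n by move=> n; apply: exprn_ge0; lra.
have Hl := lam_gt0.
split; first exact: ge0.
  by apply: ler_weXn2l => //; lia.
case: r => [|r] /=.
  rewrite expr1 expr0; have := ge0 0%N; rewrite expr0; nra.
have := c1; have := ge0 r.
have -> : bb ^+ r.+2 = (bb * bb) * bb ^+ r by rewrite !exprS mulrA.
rewrite exprS => h1 h2.
have : (qq * (bb * bb) + (1 - qq)) * bb ^+ r <= lam * bb * bb ^+ r by exact: ler_wpM2r.
have := ge0 r.+1; rewrite exprS => h3.
nra.
Qed.

End Pot.

Local Open Scope ring_scope.

Lemma rho_take s t m : (m <= t)%N -> rho (take t s) m = rho s m.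
Proof.
elim: m => [//|m IH] H /=.
by rewrite nth_take ?IH //; lia.
Qed.

Lemma mud_take s t a d : (a + d <= t)%N -> mud (take t s) a d = mud s a d.
Proof.
elim: d => [|d IH] H /=; first by rewrite rho_take //; lia.
rewrite nth_take ?rho_take ?IH //; lia.
Qed.

Section Exp.
Variable R : realType.
Variable e : R.
Hypothesis H0 : 0 < e.
Hypothesis H1 : e < 1.
Variable T : nat.
Variable p : T.-tuple bool -> R.
Hypothesis Hp0 : forall w, 0 <= p w.
Hypothesis Hp1 : \sum_(w : T.-tuple bool) p w = 1.
Hypothesis Hmart : forall t : nat, (t < T)%N -> forall b : seq bool, size b = t ->
    \sum_(w : T.-tuple bool | (take t w == b) && nth false w t) p w
      <= qq e * \sum_(w : T.-tuple bool | take t w == b) p w.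

Definition EW t := \sum_(w : T.-tuple bool) p w * bb e ^+ (rho w t).

Lemma EW_step t : (t < T)%N -> EW t.+1 <= lam e * EW t + bb e.
Proof.
move=> Ht.
have E : EW t.+1 = \sum_(w : T.-tuple bool) p w *
   (if nth false w t then (fun s => bb e ^+ (rho s t).+1) (take t w)
    else (fun s => bb e ^+ (rho s t).-1) (take t w)).
  apply: eq_bigr => w _ /=; rewrite rho_take //.
  by case: (nth false w t).
rewrite E.
have HS := @step _ _ _ _ Hp0 Hmart t (fun s => bb e ^+ (rho s t).-1) (fun s => bb e ^+ (rho s t).+1)
   (fun s => lam e * bb e ^+ (rho s t) + bb e) Ht.
apply: le_trans (HS _ _ _) _ => [s|s|s|].
  - by case: (W_step H0 H1 (rho s t)).
  - by case: (W_step H0 H1 (rho s t)).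
  - by case: (W_step H0 H1 (rho s t)).
rewrite /EW mulr_sumr.
under eq_bigr => w _ do rewrite rho_take // mulrDr.
rewrite big_split /= -big_distrl /= Hp1 mul1r.
apply: lerD => //; apply: ler_sum => w _; rewrite !mulrA (mulrC (p w)) //.
Qed.

Definition Bc := bb e / (1 - lam e).

Lemma EW_bound t : (t <= T)%N -> EW t <= Bc.
Proof.
have Hl1 := lam_lt1 H0; have Hl0 := lam_gt0 H0 H1; have Hb := bb_ge1 H0.
have Hd : 0 < 1 - lam e by lra.
have HB : Bc = lam e * Bc + bb e by rewrite /Bc; field; lra.
elim: t => [|t IH] Ht.
  rewrite /EW /=; under eq_bigr => w _ do rewrite expr0 mulr1.
  rewrite Hp1 /Bc ler_pdivlMr //; lra.
apply: le_trans (EW_step Ht) _.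
rewrite [X in _ <= X]HB; apply: lerD => //; apply: ler_wpM2l; first lra.
apply: IH; lia.
Qed.

Variable a : nat.

Definition EV d := \sum_(w : T.-tuple bool) p w * V e (rho w (a + d)) (mud w a d).

Lemma EV0 : EV 0 = EW a.
Proof.
apply: eq_bigr => w _ /=; rewrite addn0 V_pos // subnn expr0 mulr1 //.
Qed.

Lemma EV_step d : (a + d < T)%N -> EV d.+1 <= lam e * EV d.
Proof.
move=> Ht.
set t := (a + d)%N.
have E : EV d.+1 = \sum_(w : T.-tuple bool) p w *
   (if nth false w t then (fun s => V e (rho s t).+1 (mud s a d + 1)) (take t w)
    else (fun s => V e (rho s t).-1 (nu false (rho s t) (mud s a d))) (take t w)).
  apply: eq_bigr => w _ /=; rewrite rho_take // mud_take // addnS /=.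
  by rewrite /nu; case: (nth false w t).
rewrite E.
have HS := @step _ _ _ _ Hp0 Hmart t (fun s => V e (rho s t).-1 (nu false (rho s t) (mud s a d)))
  (fun s => V e (rho s t).+1 (mud s a d + 1)) (fun s => lam e * V e (rho s t) (mud s a d)) Ht.
apply: le_trans (HS _ _ _) _ => [s|s|s|].
  - by case: (V_step H0 H1 (mud_le_rho s a d)).
  - by case: (V_step H0 H1 (mud_le_rho s a d)).
  - by case: (V_step H0 H1 (mud_le_rho s a d)).
rewrite /EV mulr_sumr.
apply: ler_sum => w _; rewrite rho_take // mud_take //.
by rewrite !mulrA (mulrC (p w)).
Qed.

Lemma EV_bound d : (a + d <= T)%N -> EV d <= lam e ^+ d * Bc.
Proof.
have Hl0 := lam_gt0 H0 H1.
elim: d => [|d IH] Ht.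
  rewrite EV0 expr0 mul1r; apply: EW_bound; lia.
apply: le_trans (EV_step _) _; first lia.
rewrite exprS -mulrA; apply: ler_wpM2l; first lra.
apply: IH; lia.
Qed.

End Exp.

Local Open Scope ring_scope.

Lemma geom_sum (R : realType) (l : R) (k N : nat) : 0 < l < 1 ->
  (1 - l) * \sum_(i < N) (if (k <= i)%N then l ^+ i else 0) <= l ^+ k - l ^+ (maxn N k).
Proof.
move=> /andP [Hl0 Hl1].
elim: N => [|N IH].
  rewrite big_ord0 mulr0 max0n subrr //.
rewrite big_ord_recr /= mulrDr.
case: (leqP k N) => HkN.
  have -> : maxn N.+1 k = N.+1 by lia.
  rewrite (_ : maxn N k = N) in IH; last lia.
  rewrite exprS.
  have : 0 <= l ^+ N by apply: exprn_ge0; lra.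
  move: IH; nra.
have -> : maxn N.+1 k = k by lia.
rewrite (_ : maxn N k = k) in IH; last lia.
by rewrite mulr0 addr0.
Qed.

Lemma geom_sum' (R : realType) (l : R) (k N : nat) : 0 < l < 1 ->
  \sum_(i < N | (k <= i)%N) l ^+ i <= l ^+ k / (1 - l).
Proof.
move=> Hl; have := geom_sum k N Hl; move/andP: Hl => [Hl0 Hl1].
move=> H.
rewrite ler_pdivlMr; last lra.
rewrite big_mkcond /= mulrC; apply: le_trans H _.
have : 0 <= l ^+ maxn N k by apply: exprn_ge0; lra.
lra.
Qed.

Theorem corollary1 (R : realType) (eps : R) :
  0 < eps < 1 ->
  exists C c : R, 0 < C /\ 0 < c /\
    forall (T s k : nat) (p : T.-tuple bool -> R),
      is_distr p -> martingale_cond eps p ->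
      Pr p (bad_event s k (T:=T)) <= C * expR (- (c * k%:R)).
Proof.
move=> /andP [H0 H1].
have Hl1 := lam_lt1 H0; have Hl0 := lam_gt0 H0 H1; have Hb := bb_ge1 H0.
have Hd : 0 < 1 - lam eps by lra.
have HBc : 0 < Bc eps by rewrite /Bc; apply: divr_gt0 => //; lra.
exists (Bc eps / (1 - lam eps)), (- ln (lam eps)); split.
  by apply: divr_gt0.
split.
  by rewrite oppr_gt0; apply: ln_lt0; apply/andP.
move=> T s k p [Hp0 Hp1] Hmart.
have Hm : forall t : nat, (t < T)%N -> forall b : seq bool, size b = t ->
    \sum_(w : T.-tuple bool | (take t w == b) && nth false w t) p w
      <= qq eps * \sum_(w : T.-tuple bool | take t w == b) p w := Hmart.
set a := s.-1.
have Hexp : expR (- (- ln (lam eps) * k%:R)) = lam eps ^+ k.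
  rewrite mulNr opprK expRM_natr lnK //; rewrite posrE //.
rewrite Hexp.
pose S (w : T.-tuple bool) := \sum_(l < T.+1 | (k <= l)%N && (a + l <= T)%N)
   V eps (rho w (a + l)) (mud w a l).
have S0 : forall w, 0 <= S w by move=> w; apply: sumr_ge0 => l _; exact: V_ge0.
have Hpt : forall w : T.-tuple bool,
    (if `[< bad_event s k w >] then p w else 0) <= p w * S w.
  move=> w; case: asboolP => [Hbad|_]; last by apply: mulr_ge0.
  rewrite -[X in X <= _]mulr1; apply: ler_wpM2l => //.
  case: Hbad => x [y [z [Hw Hx Hy [F [HF HC Hmu]]]]].
  have Hmb := mu_fork_bound HF HC.
  set l := size y.
  have Hsz : size w = T by rewrite size_tuple.
  have Ha : a = size x by rewrite Hx.
  have HaT : (a + l <= T)%N by rewrite -Hsz Hw !size_cat Ha /l; lia.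
  have Htk : take (a + l) w = x ++ y.
    by rewrite Hw catA take_size_cat // size_cat Ha.
  have Hmu0 : 0 <= mud w a l.
    rewrite -(mud_take w (t := a + l)) // Htk Ha.
    exact: le_trans Hmu Hmb.
  have HlT : (l < T.+1)%N by lia.
  rewrite /S (bigD1 (Ordinal HlT)) /=; last by rewrite Hy HaT.
  have Hle := mud_le_rho w a l.
  have [n Hn] : exists n : nat, mud w a l = n by exists (absz (mud w a l)); lia.
  rewrite Hn.
  have := @V_ge1 R eps H0 H1 (rho w (a + l)) n (ltac:(lia)).
  have : 0 <= \sum_(i < T.+1 | ((k <= i)%N && (a + i <= T)%N) && (i != Ordinal HlT))
      V eps (rho w (a + i)) (mud w a i).
    by apply: sumr_ge0 => i _; exact: V_ge0.
  lra.
apply: le_trans (ler_sum _ (fun w _ => Hpt w)) _.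
have -> : \sum_(w : T.-tuple bool) p w * S w =
    \sum_(l < T.+1 | (k <= l)%N && (a + l <= T)%N) EV eps p a l.
  rewrite /S /EV; under eq_bigr => w _ do rewrite mulr_sumr.
  by rewrite exchange_big.
apply: le_trans (_ : \sum_(l < T.+1 | (k <= l)%N) lam eps ^+ l * Bc eps <= _).
  rewrite big_mkcondr /=; apply: ler_sum => l _.
  case: ifP => Hl.
    exact: (EV_bound H0 H1 Hp0 Hp1 Hm).
  by apply: mulr_ge0 => //; [apply: exprn_ge0; lra | lra].
rewrite -mulr_suml.
have Hl01 : 0 < lam eps < 1 by apply/andP.
have := geom_sum' k T.+1 Hl01.
move=> HG.
apply: le_trans (ler_wpM2r (ltW HBc) HG) _.
rewrite (_ : Bc eps / (1 - lam eps) * lam eps ^+ k = lam eps ^+ k / (1 - lam eps) * Bc eps) //.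
ring.
Qed.
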